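(* Consider the fully discrete explicit splitting scheme described in the context, with mirrored boundary layers and initialisation $\boldsymbol{u}^0=\boldsymbol{f}$, and let the time step size satisfy $\tau\le\min\{\tau_1,\tau_2,\tau_3,\tau_4\}$ where $$\tau_1=\frac{h^2}{4(1-\nu)|p-1|},\quad \tau_2=\frac{h^2}{2\nu|p-1|},\quad \tau_3=\frac{h^2}{2\sqrt2(1-\nu)|2-p|},\quad \tau_4=\frac{h^2}{2\nu|2-p|}$$ (a quotient with vanishing denominator is read as $+\infty$). Then the scheme is $L^\infty$-stable, $\|\boldsymbol{u}^k\|_\infty\le\|\boldsymbol{u}^{k-1}\|_\infty$ for all $k\ge1$, and satisfies the discrete maximum–minimum principle $\min_{i,j}f_{i,j}\le u^k_{n,m}\le\max_{i,j}f_{i,j}$ for all grid indices $n,m$ and all $k\ge1$.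
   Context: The scheme discretises $u_t=(2-p)\,\mathrm{curv}(u)|\nabla u|+(p-1)\Delta u$ (for $p\ge1$) resp. $u_t=(2-p)\,\mathrm{curv}(u)|\nabla u|+(p-1)\operatorname{sgn}(|\nabla u|)\Delta u$ (for $p<1$), with $p\in\mathbb{R}$, on a rectangular grid of spacing $h$ with values $u_{i,j}$, given image $\boldsymbol{f}$, and weight $\nu\in(0,1)$ (the paper uses $\nu=\sqrt2-1$). Values outside the grid are defined by mirroring one or two layers of boundary pixels (homogeneous Neumann boundary conditions). Forward differences: $u^x_{i,j}=(u_{i+1,j}-u_{i,j})/h$, $u^y_{i,j}=(u_{i,j+1}-u_{i,j})/h$, $u^d_{i,j}=(u_{i+1,j+1}-u_{i,j})/(\sqrt2h)$, $u^e_{i,j}=(u_{i+1,j-1}-u_{i,j})/(\sqrt2h)$. Minmod: $\mathrm{M}(a,b,c)$ is the argument of minimal modulus if $ab\ge0$ and $ac\ge0$, and $0$ otherwise. Diffusion operators: for $p\ge1$, $\boldsymbol{D}_+(\boldsymbol u)_{i,j}=(p-1)(u_{i+1,j}+u_{i-1,j}+u_{i,j+1}+u_{i,j-1}-4u_{i,j})/h^2$ and $\boldsymbol{D}_\times(\boldsymbol u)_{i,j}=(p-1)(u_{i+1,j+1}+u_{i-1,j-1}+u_{i+1,j-1}+u_{i-1,j+1}-4u_{i,j})/(2h^2)$. For $p<1$, $\boldsymbol{D}_+(\boldsymbol u)_{i,j}=\frac{p-1}{h}\bigl(\mathrm{M}(u^x_{i+1,j},u^x_{i,j},u^x_{i-1,j})-\mathrm{M}(u^x_{i,j},u^x_{i-1,j},u^x_{i-2,j})+\mathrm{M}(u^y_{i,j+1},u^y_{i,j},u^y_{i,j-1})-\mathrm{M}(u^y_{i,j},u^y_{i,j-1},u^y_{i,j-2})\bigr)$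 and $\boldsymbol{D}_\times(\boldsymbol u)_{i,j}=\frac{p-1}{\sqrt2h}\bigl(\mathrm{M}(u^d_{i+1,j+1},u^d_{i,j},u^d_{i-1,j-1})-\mathrm{M}(u^d_{i,j},u^d_{i-1,j-1},u^d_{i-2,j-2})+\mathrm{M}(u^e_{i+1,j-1},u^e_{i,j},u^e_{i-1,j+1})-\mathrm{M}(u^e_{i,j},u^e_{i-1,j+1},u^e_{i-2,j+2})\bigr)$. Curvature: $c_{i,j}$ is the isophote curvature $(u_x^2u_{yy}-2u_xu_yu_{xy}+u_y^2u_{xx})/(u_x^2+u_y^2+\epsilon)^{3/2}$, $\epsilon=10^{-10}$, with derivatives approximated by central differences, then clipped to $[-2/h,2/h]$. Curvature operators: $\boldsymbol{M}_+(\boldsymbol u)_{i,j}=(2-p)c_{i,j}\,G^+_{i,j}$, $\boldsymbol{M}_\times(\boldsymbol u)_{i,j}=(2-p)c_{i,j}\,G^\times_{i,j}$, where (Rouy–Tourin upwinding) if $(2-p)c_{i,j}\ge0$ (dilation case) $G^+_{i,j}=\bigl(\max(-u^x_{i-1,j},u^x_{i,j},0)^2+\max(-u^y_{i,j-1},u^y_{i,j},0)^2\bigr)^{1/2}$ and $G^\times_{i,j}=\bigl(\max(-u^d_{i-1,j-1},u^d_{i,j},0)^2+\max(-u^e_{i-1,j+1},u^e_{i,j},0)^2\bigr)^{1/2}$, and otherwise (erosion case) $G^+_{i,j}=\bigl(\max(-u^x_{i,j},u^x_{i-1,j},0)^2+\max(-u^y_{i,j},u^y_{i,j-1},0)^2\bigr)^{1/2}$,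 $G^\times_{i,j}=\bigl(\max(-u^d_{i,j},u^d_{i-1,j-1},0)^2+\max(-u^e_{i,j},u^e_{i-1,j+1},0)^2\bigr)^{1/2}$. Scheme: $\boldsymbol u^{k+1/4}=\boldsymbol u^k+\tau(1-\nu)\boldsymbol D_+(\boldsymbol u^k)$, $\boldsymbol u^{k+1/2}=\boldsymbol u^{k+1/4}+\tau\nu\boldsymbol D_\times(\boldsymbol u^{k+1/4})$, $\boldsymbol u^{k+3/4}=\boldsymbol u^{k+1/2}+\tau(1-\nu)\boldsymbol M_+(\boldsymbol u^{k+1/2})$, $\boldsymbol u^{k+1}=\boldsymbol u^{k+3/4}+\tau\nu\boldsymbol M_\times(\boldsymbol u^{k+3/4})$. *)

(* Defs.v *)
From HB Require Import structures.
From mathcomp Require Import all_boot all_order all_algebra.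
From mathcomp Require Import reals.
Set Implicit Arguments. Unset Strict Implicit. Unset Printing Implicit Defensive.
Import Order.TTheory GRing.Theory Num.Theory.
Local Open Scope ring_scope.

Section Scheme.
Variable R : realType.

(* Only the
   values at indices 0 <= i < N, 0 <= j < M are ever read; all other values
   are obtained by mirroring (homogeneous Neumann boundary conditions). *)
Definition grid := int -> int -> R.

(* Mirror reflection of an integer index into [0, n): the sequence
   ... u_1 u_0 | u_0 u_1 ... u_{n-1} | u_{n-1} u_{n-2} ...  (period 2n).
   For one or two layers this gives u_{-1}=u_0, u_{-2}=u_1,
   u_n=u_{n-1}, u_{n+1}=u_{n-2}. *)
Definition refl (n : nat) (i : int) : int :=
  let r := (i %% (2 * n)%:Z)%Z in
  if r < n%:Z then r else (2 * n)%:Z - 1 - r.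

Definition ext (N M : nat) (u : grid) : grid :=
  fun i j => u (refl N i) (refl M j).

Definition minmod (a b c : R) : R :=
  if (0 <= a * b) && (0 <= a * c) then
    (if (`|a| <= `|b|) && (`|a| <= `|c|) then a
     else if `|b| <= `|c| then b else c)
  else 0.

Definition max3 (a b c : R) : R := Num.max a (Num.max b c).

Section Ops.
Variables (p h : R) (U : grid).

Definition dx i j := (U (i + 1) j - U i j) / h.
Definition dy i j := (U i (j + 1) - U i j) / h.
Definition dd i j := (U (i + 1) (j + 1) - U i j) / (Num.sqrt 2 * h).
Definition de i j := (U (i + 1) (j - 1) - U i j) / (Num.sqrt 2 * h).

Definition Dplus i j : R :=
  if 1 <= p then
    (p - 1) * (U (i + 1) j + U (i - 1) j + U i (j + 1) + U i (j - 1)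
               - 4 * U i j) / h ^+ 2
  else
    (p - 1) / h *
    (minmod (dx (i + 1) j) (dx i j) (dx (i - 1) j)
     - minmod (dx i j) (dx (i - 1) j) (dx (i - 2) j)
     + minmod (dy i (j + 1)) (dy i j) (dy i (j - 1))
     - minmod (dy i j) (dy i (j - 1)) (dy i (j - 2))).

Definition Dcross i j : R :=
  if 1 <= p then
    (p - 1) * (U (i + 1) (j + 1) + U (i - 1) (j - 1) + U (i + 1) (j - 1)
               + U (i - 1) (j + 1) - 4 * U i j) / (2 * h ^+ 2)
  else
    (p - 1) / (Num.sqrt 2 * h) *
    (minmod (dd (i + 1) (j + 1)) (dd i j) (dd (i - 1) (j - 1))
     - minmod (dd i j) (dd (i - 1) (j - 1)) (dd (i - 2) (j - 2))
     + minmod (de (i + 1) (j - 1)) (de i j) (de (i - 1) (j + 1))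
     - minmod (de i j) (de (i - 1) (j + 1)) (de (i - 2) (j + 2))).

Definition curv_eps : R := (10 ^+ 10)^-1.

(* isophote curvature with central differences, clipped to [-2/h, 2/h] *)
Definition curv i j : R :=
  let ux := (U (i + 1) j - U (i - 1) j) / (2 * h) in
  let uy := (U i (j + 1) - U i (j - 1)) / (2 * h) in
  let uxx := (U (i + 1) j - 2 * U i j + U (i - 1) j) / h ^+ 2 in
  let uyy := (U i (j + 1) - 2 * U i j + U i (j - 1)) / h ^+ 2 in
  let uxy := (U (i + 1) (j + 1) - U (i + 1) (j - 1)
              - U (i - 1) (j + 1) + U (i - 1) (j - 1)) / (4 * h ^+ 2) in
  let c := (ux ^+ 2 * uyy - 2 * ux * uy * uxy + uy ^+ 2 * uxx)
           / (Num.sqrt (ux ^+ 2 + uy ^+ 2 + curv_eps)) ^+ 3 in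
  Num.min (2 / h) (Num.max (- (2 / h)) c).

(* Rouy--Tourin upwind gradient norms *)
Definition Gplus i j : R :=
  if 0 <= (2 - p) * curv i j then
    Num.sqrt (max3 (- dx (i - 1) j) (dx i j) 0 ^+ 2
              + max3 (- dy i (j - 1)) (dy i j) 0 ^+ 2)
  else
    Num.sqrt (max3 (- dx i j) (dx (i - 1) j) 0 ^+ 2
              + max3 (- dy i j) (dy i (j - 1)) 0 ^+ 2).

Definition Gcross i j : R :=
  if 0 <= (2 - p) * curv i j then
    Num.sqrt (max3 (- dd (i - 1) (j - 1)) (dd i j) 0 ^+ 2
              + max3 (- de (i - 1) (j + 1)) (de i j) 0 ^+ 2)
  else
    Num.sqrt (max3 (- dd i j) (dd (i - 1) (j - 1)) 0 ^+ 2
              + max3 (- de i j) (de (i - 1) (j + 1)) 0 ^+ 2).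

Definition Mplus i j : R := (2 - p) * curv i j * Gplus i j.
Definition Mcross i j : R := (2 - p) * curv i j * Gcross i j.

End Ops.

Section Step.
Variables (N M : nat) (p h nu tau : R).

Definition step1 (u : grid) : grid :=
  fun i j => ext N M u i j + tau * (1 - nu) * Dplus p h (ext N M u) i j.
Definition step2 (u : grid) : grid :=
  fun i j => ext N M u i j + tau * nu * Dcross p h (ext N M u) i j.
Definition step3 (u : grid) : grid :=
  fun i j => ext N M u i j + tau * (1 - nu) * Mplus p h (ext N M u) i j.
Definition step4 (u : grid) : grid :=
  fun i j => ext N M u i j + tau * nu * Mcross p h (ext N M u) i j.

Definition scheme_step (u : grid) : grid := step4 (step3 (step2 (step1 u))).

Definition iterate (f : grid) (k : nat) : grid := iter k scheme_step f.

End Step.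

Definition supnorm (N M : nat) (u : grid) : R :=
  \big[Num.max/0]_(i < N) \big[Num.max/0]_(j < M) `|u i%:Z j%:Z|.

(* min / max of grid values (meaningful for N, M >= 1; (0,0) is a grid point) *)
Definition gridmax (N M : nat) (u : grid) : R :=
  \big[Num.max/u 0 0]_(i < N) \big[Num.max/u 0 0]_(j < M) u i%:Z j%:Z.
Definition gridmin (N M : nat) (u : grid) : R :=
  \big[Num.min/u 0 0]_(i < N) \big[Num.min/u 0 0]_(j < M) u i%:Z j%:Z.

End Scheme.

(* Main.v *)
Require Import Defs.
From HB Require Import structures.
From mathcomp Require Import all_boot all_order all_algebra.
From mathcomp Require Import reals ring lra zify.
Import Order.TTheory GRing.Theory Num.Theory.
Local Open Scope ring_scope.


Lemma minmod_prop (R : realType) (x y z : R) :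
  let r := minmod x y z in
  [/\ `|r| <= `|x|, `|r| <= `|y|, `|r| <= `|z|, 0 <= r * x & 0 <= r * y /\ 0 <= r * z].
Proof.
rewrite /minmod.
case: ifP => [/andP[h1 h2]|_]; last by rewrite !normr0 !mul0r; split; rewrite ?normr_ge0.
case: (ltrgt0P x) => hx.
- have hy : 0 <= y by rewrite -(pmulr_rge0 _ hx).
  have hz : 0 <= z by rewrite -(pmulr_rge0 _ hx).
  clear h1 h2; rewrite (ger0_norm hy) (ger0_norm hz).
  case: ifP => [/andP[h3 h4]|/negbT]; first by split; rewrite ?gtr0_norm //; nra.
  rewrite negb_and -!ltNge => /orP[h5|h5];
  (case: ifP => [h6 |/negbT]; [split; rewrite ?ger0_norm //; nra | rewrite -ltNge => h7; split; rewrite ?ger0_norm //; nra]).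
- have hy : y <= 0 by nra.
  have hz : z <= 0 by nra.
  clear h1 h2; rewrite (ler0_norm hy) (ler0_norm hz).
  case: ifP => [/andP[h3 h4]|/negbT]; first by split; rewrite ?ltr0_norm //; nra.
  rewrite negb_and -!ltNge => /orP[h5|h5];
  (case: ifP => [h6 |/negbT]; [split; rewrite ?ler0_norm //; nra | rewrite -ltNge => h7; split; rewrite ?ler0_norm //; nra]).
- subst x; rewrite ?normr0 !normr_ge0 /= ?normr0 !mulr0 !mul0r; split => //.
Qed.


Lemma mm_diff (R : realType) (e a b g X Y : R) : 0 <= X -> 0 <= Y ->
  a <= X -> - a <= Y -> b <= Y -> - b <= X ->
  `|minmod e a b - minmod a b g| <= X /\ `|minmod e a b - minmod a b g| <= Y.
Proof.
move=> X0 Y0 h1 h2 h3 h4.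
have [_ p1 p2 _ [p3 p4]] := minmod_prop _ e a b.
have [q1 q2 _ q3 [q4 _]] := minmod_prop _ a b g.
move: p1 p2 p3 p4 q1 q2 q3 q4.
set m1 := minmod e a b; set m2 := minmod a b g.
move=> p1 p2 p3 p4 q1 q2 q3 q4.
rewrite !ler_norml.
case: (ltrgt0P a) => ha; case: (ltrgt0P b) => hb; move: p1 p2 q1 q2;
  rewrite ?(gtr0_norm ha) ?(ltr0_norm ha) ?(gtr0_norm hb) ?(ltr0_norm hb) ?ha ?hb ?normr0 !ler_norml
  => /andP[p1 p1'] /andP[p2 p2'] /andP[q1 q1'] /andP[q2 q2'].
all: try (have s1 : 0 <= m1 by nra); try (have s1' : m1 <= 0 by nra);
     try (have s2 : 0 <= m2 by nra); try (have s2' : m2 <= 0 by nra).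
all: split; apply/andP; split; lra.
Qed.

Set Implicit Arguments. Unset Strict Implicit.



Lemma conv4 (R : realType) (L v a b c d lo hi : R) : 0 <= L -> 4 * L <= 1 ->
  lo <= v <= hi -> lo <= a <= hi -> lo <= b <= hi -> lo <= c <= hi -> lo <= d <= hi ->
  lo <= v + L * (a + b + c + d - 4 * v) <= hi.
Proof.
move=> h1 h2 /andP[? ?] /andP[? ?] /andP[? ?] /andP[? ?] /andP[? ?].
apply/andP; split; nra.
Qed.

Lemma absstep (R : realType) (v lo hi K qx qy : R) : lo <= v <= hi -> 0 <= K -> 2 * K <= 1 ->
  `|qx| <= hi - v -> `|qx| <= v - lo -> `|qy| <= hi - v -> `|qy| <= v - lo ->
  lo <= v - K * (qx + qy) <= hi.
Proof.
move=> /andP[? ?] ? ?; rewrite !ler_norml => /andP[? ?] /andP[? ?] /andP[? ?] /andP[? ?].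
apply/andP; split; nra.
Qed.

Lemma sqrt2b (R : realType) (a b z : R) : 0 <= a -> a <= z -> 0 <= b -> b <= z ->
  Num.sqrt (a ^+ 2 + b ^+ 2) <= Num.sqrt 2 * z.
Proof.
move=> a0 az b0 bz.
have z0 : 0 <= z by lra.
have -> : Num.sqrt 2 * z = Num.sqrt (2 * z ^+ 2).
  by rewrite sqrtrM // sqrtr_sqr ger0_norm.
rewrite ler_sqrt; last by nra.
nra.
Qed.

Lemma max3_le (R : realType) (x y z : R) : x <= z -> y <= z -> 0 <= z ->
  0 <= max3 x y 0 /\ max3 x y 0 <= z.
Proof.
move=> h1 h2 h3; rewrite /max3; split.
  by rewrite !le_max lexx !orbT.
by rewrite !ge_max h1 h2 h3.
Qed.

Lemma upw (R : realType) (v lo hi k s A B C D beta : R) :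
  lo <= v <= hi -> 0 <= k -> 0 <= beta ->
  0 <= A -> A <= (hi - v) * beta -> 0 <= B -> B <= (hi - v) * beta ->
  0 <= C -> C <= (v - lo) * beta -> 0 <= D -> D <= (v - lo) * beta ->
  k * `|s| * (Num.sqrt 2 * beta) <= 1 ->
  lo <= v + k * (s * (if 0 <= s then Num.sqrt (A ^+ 2 + B ^+ 2)
                      else Num.sqrt (C ^+ 2 + D ^+ 2))) <= hi.
Proof.
move=> /andP[h1 h2] k0 b0 A0 A1 B0 B1 C0 C1 D0 D1 hk.
case: ifP => hs.
- rewrite ger0_norm // in hk.
  have G0 := sqrtr_ge0 (A ^+ 2 + B ^+ 2).
  have G1 := sqrt2b A0 A1 B0 B1.
  set G := Num.sqrt _ in G0 G1 *.
  have ks : 0 <= k * s by apply: mulr_ge0.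
  have e1 : k * s * G <= k * s * (Num.sqrt 2 * ((hi - v) * beta)) by apply: ler_wpM2l.
  have e2 : k * s * (Num.sqrt 2 * ((hi - v) * beta)) = (k * s * (Num.sqrt 2 * beta)) * (hi - v) by ring.
  have e3 : 0 <= k * s * G by apply: mulr_ge0.
  apply/andP; split; nra.
- move/negbT: hs; rewrite -ltNge => hs.
  rewrite ltr0_norm // in hk.
  have G0 := sqrtr_ge0 (C ^+ 2 + D ^+ 2).
  have G1 := sqrt2b C0 C1 D0 D1.
  set G := Num.sqrt _ in G0 G1 *.
  have ks : 0 <= k * - s by apply: mulr_ge0; lra.
  have e1 : k * - s * G <= k * - s * (Num.sqrt 2 * ((v - lo) * beta)) by apply: ler_wpM2l.
  have e2 : k * - s * (Num.sqrt 2 * ((v - lo) * beta)) = (k * - s * (Num.sqrt 2 * beta)) * (v - lo) by ring.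
  have e3 : 0 <= k * - s * G by apply: mulr_ge0.
  apply/andP; split; nra.
Qed.

Lemma dbounds (R : realType) (a v lo hi c : R) : lo <= a <= hi -> lo <= v <= hi -> 0 < c ->
  [/\ (a - v) / c <= (hi - v) / c, - ((a - v) / c) <= (v - lo) / c,
      (v - a) / c <= (v - lo) / c & - ((v - a) / c) <= (hi - v) / c].
Proof.
move=> /andP[? ?] /andP[? ?] c0.
have ci : 0 <= c^-1 by rewrite invr_ge0 ltW.
rewrite -!mulNr; split; apply: ler_wpM2r => //; lra.
Qed.

Lemma scale_bound (R : realType) (h q X : R) : 0 < h -> `|q| <= X / h -> `|h * q| <= X.
Proof.
move=> h0 hq; rewrite normrM gtr0_norm // -ler_pdivlMl // mulrC //.
Qed.

Lemma tau_mul (R : realType) (tau h c D : R) : 0 < c -> 0 <= D -> (D != 0 -> tau <= h ^+ 2 / (c * D)) ->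
  0 < h -> tau * (c * D) <= h ^+ 2.
Proof.
move=> c0 D0 hD h0; have [->|Dn] := eqVneq D 0; first by rewrite mulr0 mulr0 sqr_ge0.
by rewrite -ler_pdivlMr ?hD // mulr_gt0 // lt0r Dn.
Qed.

Lemma mm_diff' (R : realType) (a b X Y : R) : 0 <= X -> 0 <= Y ->
  a <= X -> - a <= Y -> b <= Y -> - b <= X -> forall e g,
  `|minmod e a b - minmod a b g| <= X /\ `|minmod e a b - minmod a b g| <= Y.
Proof. by move=> *; apply: mm_diff. Qed.



Lemma step_Dplus (R : realType) (p h nu tau lo hi : R) (V : grid R) (i j : int) :
  0 < h -> 0 < nu -> nu < 1 -> 0 < tau ->
  (`|p - 1| != 0 -> tau <= h ^+ 2 / (4 * (1 - nu) * `|p - 1|)) ->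
  (forall i j, lo <= V i j <= hi) ->
  lo <= V i j + tau * (1 - nu) * Dplus p h V i j <= hi.
Proof.
move=> h0 nu0 nu1 t0 ht hV.
have ht' := tau_mul (c := 4 * (1 - nu)) ltac:(lra) (normr_ge0 _) ht h0.
have hv := hV i j.
have h2 : 0 < h ^+ 2 by rewrite exprn_gt0.
rewrite /Dplus; case: ifP => hp.
- set L := tau * (1 - nu) * (p - 1) / h ^+ 2.
  have -> : forall X, tau * (1 - nu) * ((p - 1) * X / h ^+ 2) = L * X.
    by move=> X; rewrite /L; field; rewrite lt0r_neq0.
  apply: conv4 => //.
  + rewrite /L; apply: divr_ge0; last exact: ltW.
    apply: mulr_ge0; [apply: mulr_ge0; lra | lra].
  + rewrite /L mulrA ler_pdivrMr // mul1r.
    rewrite ger0_norm in ht'; last by lra.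
    apply: (le_trans _ ht'); rewrite le_eqVlt; apply/orP; left; apply/eqP; ring.
- move/negbT: hp; rewrite -ltNge => hp.
  rewrite ltr0_norm in ht'; last by lra.
  set v := V i j in hv *.
  have /andP[lv vh] := hv.
  have X0 : 0 <= (hi - v) / h by apply: divr_ge0; lra.
  have Y0 : 0 <= (v - lo) / h by apply: divr_ge0; lra.
  have [a1 a2 _ _] := dbounds (hV (i + 1) j) hv h0.
  have [_ _ b1 b2] := dbounds (hV (i - 1) j) hv h0.
  have [c1 c2 _ _] := dbounds (hV i (j + 1)) hv h0.
  have [_ _ d1 d2] := dbounds (hV i (j - 1)) hv h0.
  have hx := mm_diff' X0 Y0 a1 a2 b1 b2.
  have hy := mm_diff' X0 Y0 c1 c2 d1 d2.
  have E : forall a b c d, tau * (1 - nu) * ((p - 1) / h * (a - b + c - d))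
       = - (tau * (1 - nu) * (1 - p) / h ^+ 2) * (h * (a - b) + h * (c - d)).
    by move=> a b c d; field; rewrite lt0r_neq0.
  rewrite /dx /dy !subrK -/v E -[v - _]/(v + _) mulNr.
  apply: absstep => //.
  + apply: divr_ge0; last exact: ltW.
    apply: mulr_ge0; [apply: mulr_ge0|]; lra.
  + rewrite mulrA ler_pdivrMr // mul1r.
    have Z0 : 0 <= tau * (4 * (1 - nu) * - (p - 1)).
      by apply: mulr_ge0; [lra| apply: mulr_ge0; lra].
    have -> : 2 * (tau * (1 - nu) * (1 - p)) = tau * (4 * (1 - nu) * - (p - 1)) / 2 by field.
    move: Z0 ht'; set X := tau * _; lra.
  + by apply: scale_bound => //; apply: (hx _ _).1.
  + by apply: scale_bound => //; apply: (hx _ _).2.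
  + by apply: scale_bound => //; apply: (hy _ _).1.
  + by apply: scale_bound => //; apply: (hy _ _).2.
Qed.



Lemma step_Dcross (R : realType) (p h nu tau lo hi : R) (V : grid R) (i j : int) :
  0 < h -> 0 < nu -> nu < 1 -> 0 < tau ->
  (`|p - 1| != 0 -> tau <= h ^+ 2 / (2 * nu * `|p - 1|)) ->
  (forall i j, lo <= V i j <= hi) ->
  lo <= V i j + tau * nu * Dcross p h V i j <= hi.
Proof.
move=> h0 nu0 nu1 t0 ht hV.
have ht' := tau_mul (c := 2 * nu) ltac:(lra) (normr_ge0 _) ht h0.
have hv := hV i j.
have h2 : 0 < h ^+ 2 by rewrite exprn_gt0.
rewrite /Dcross; case: ifP => hp.
- set L := tau * nu * (p - 1) / (2 * h ^+ 2).
  have -> : forall X, tau * nu * ((p - 1) * X / (2 * h ^+ 2)) = L * X.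
    by move=> X; rewrite /L; field; rewrite lt0r_neq0.
  apply: conv4 => //.
  + rewrite /L; apply: divr_ge0; last by apply: ltW; apply: mulr_gt0.
    apply: mulr_ge0; [apply: mulr_ge0; lra | lra].
  + rewrite /L mulrA ler_pdivrMr ?mulr_gt0 // mul1r.
    rewrite ger0_norm in ht'; last by lra.
    have -> : 4 * (tau * nu * (p - 1)) = 2 * (tau * (2 * nu * (p - 1))) by ring.
    move: ht'; set X := tau * _; lra.
- move/negbT: hp; rewrite -ltNge => hp.
  rewrite ltr0_norm in ht'; last by lra.
  set v := V i j in hv *.
  have /andP[lv vh] := hv.
  have s0 : 0 < Num.sqrt 2 * h by rewrite mulr_gt0 // sqrtr_gt0.
  set c := Num.sqrt 2 * h in s0 *.
  have X0 : 0 <= (hi - v) / c by apply: divr_ge0; lra.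
  have Y0 : 0 <= (v - lo) / c by apply: divr_ge0; lra.
  have [a1 a2 _ _] := dbounds (hV (i + 1) (j + 1)) hv s0.
  have [_ _ b1 b2] := dbounds (hV (i - 1) (j - 1)) hv s0.
  have [c1 c2 _ _] := dbounds (hV (i + 1) (j - 1)) hv s0.
  have [_ _ d1 d2] := dbounds (hV (i - 1) (j + 1)) hv s0.
  have hx := mm_diff' X0 Y0 a1 a2 b1 b2.
  have hy := mm_diff' X0 Y0 c1 c2 d1 d2.
  have E : forall a b c' d, tau * nu * ((p - 1) / c * (a - b + c' - d))
       = - (tau * nu * (1 - p) / c ^+ 2) * (c * (a - b) + c * (c' - d)).
    by move=> a b c' d; field; rewrite lt0r_neq0.
  rewrite /dd /de -/c !subrK !addrK -/v E -[v - _]/(v + _) mulNr.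
  apply: absstep => //.
  + apply: divr_ge0; last by apply: ltW; rewrite exprn_gt0.
    apply: mulr_ge0; [apply: mulr_ge0|]; lra.
  + rewrite mulrA ler_pdivrMr ?exprn_gt0 // mul1r /c exprMn sqr_sqrtr //.
    have -> : 2 * (tau * nu * (1 - p)) = 2 * (tau * (2 * nu * - (p - 1))) / 2 by field.
    move: ht'; set X := tau * _; lra.
  + by apply: scale_bound => //; apply: (hx _ _).1.
  + by apply: scale_bound => //; apply: (hx _ _).2.
  + by apply: scale_bound => //; apply: (hy _ _).1.
  + by apply: scale_bound => //; apply: (hy _ _).2.
Qed.



Lemma clip (R : realType) (a c : R) : 0 <= a -> `|Num.min a (Num.max (- a) c)| <= a.
Proof.
move=> a0; rewrite ler_norml; apply/andP; split.
  by rewrite le_min le_max lexx /= andbT; lra.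
by rewrite ge_min lexx.
Qed.

Lemma curv_le (R : realType) (h : R) (U : grid R) i j : 0 < h -> `|curv h U i j| <= 2 / h.
Proof. move=> h0; apply: clip; apply: divr_ge0; [lra | exact: ltW]. Qed.

Lemma step_Mplus (R : realType) (p h nu tau lo hi : R) (V : grid R) (i j : int) :
  0 < h -> 0 < nu -> nu < 1 -> 0 < tau ->
  (`|2 - p| != 0 -> tau <= h ^+ 2 / (2 * Num.sqrt 2 * (1 - nu) * `|2 - p|)) ->
  (forall i j, lo <= V i j <= hi) ->
  lo <= V i j + tau * (1 - nu) * Mplus p h V i j <= hi.
Proof.
move=> h0 nu0 nu1 t0 ht hV.
have s2 : 0 < Num.sqrt 2 :> R by rewrite sqrtr_gt0.
have ht' := tau_mul (c := 2 * Num.sqrt 2 * (1 - nu)) ltac:(apply: mulr_gt0; [apply: mulr_gt0|]; lra) (normr_ge0 _) ht h0.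
have hv := hV i j.
have h2 : 0 < h ^+ 2 by rewrite exprn_gt0.
have cb := curv_le V i j h0.
have hi0 : 0 <= h^-1 by rewrite invr_ge0 ltW.
rewrite /Mplus /Gplus /dx /dy !subrK.
set v := V i j in hv *.
have /andP[lv vh] := hv.
have X0 : 0 <= (hi - v) / h by apply: divr_ge0; lra.
have Y0 : 0 <= (v - lo) / h by apply: divr_ge0; lra.
have [a1 a2 _ _] := dbounds (hV (i + 1) j) hv h0.
have [_ _ b1 b2] := dbounds (hV (i - 1) j) hv h0.
have [c1 c2 _ _] := dbounds (hV i (j + 1)) hv h0.
have [_ _ d1 d2] := dbounds (hV i (j - 1)) hv h0.
have [A0 A1] := max3_le b2 a1 X0.
have [B0 B1] := max3_le d2 c1 X0.
have [C0 C1] := max3_le a2 b1 Y0.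
have [D0 D1] := max3_le c2 d1 Y0.
apply: (upw (beta := h^-1)) => //.
- apply: mulr_ge0; lra.
- set s := (2 - p) * _.
  have sb : `|s| <= `|2 - p| * (2 / h) by rewrite /s normrM ler_wpM2l.
  have w0 : 0 <= Num.sqrt 2 * h^-1 by apply: mulr_ge0 => //; exact: ltW.
  have k0 : 0 <= tau * (1 - nu) by apply: mulr_ge0; lra.
  apply: (le_trans (y := tau * (1 - nu) * (`|2 - p| * (2 / h)) * (Num.sqrt 2 * h^-1))).
    by apply: ler_wpM2r => //; apply: ler_wpM2l.
  have -> : tau * (1 - nu) * (`|2 - p| * (2 / h)) * (Num.sqrt 2 * h^-1)
     = tau * (2 * Num.sqrt 2 * (1 - nu) * `|2 - p|) / h ^+ 2.
    by field; rewrite lt0r_neq0.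
  by rewrite ler_pdivrMr // mul1r.
Qed.

Lemma step_Mcross (R : realType) (p h nu tau lo hi : R) (V : grid R) (i j : int) :
  0 < h -> 0 < nu -> nu < 1 -> 0 < tau ->
  (`|2 - p| != 0 -> tau <= h ^+ 2 / (2 * nu * `|2 - p|)) ->
  (forall i j, lo <= V i j <= hi) ->
  lo <= V i j + tau * nu * Mcross p h V i j <= hi.
Proof.
move=> h0 nu0 nu1 t0 ht hV.
have s2 : 0 < Num.sqrt 2 :> R by rewrite sqrtr_gt0.
have ht' := tau_mul (c := 2 * nu) ltac:(lra) (normr_ge0 _) ht h0.
have hv := hV i j.
have h2 : 0 < h ^+ 2 by rewrite exprn_gt0.
have cb := curv_le V i j h0.
have sh0 : 0 < Num.sqrt 2 * h by rewrite mulr_gt0.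
have hi0 : 0 <= (Num.sqrt 2 * h)^-1 by rewrite invr_ge0 ltW.
rewrite /Mcross /Gcross /dd /de !subrK !addrK.
set v := V i j in hv *.
have /andP[lv vh] := hv.
have X0 : 0 <= (hi - v) / (Num.sqrt 2 * h) by apply: divr_ge0; lra.
have Y0 : 0 <= (v - lo) / (Num.sqrt 2 * h) by apply: divr_ge0; lra.
have [a1 a2 _ _] := dbounds (hV (i + 1) (j + 1)) hv sh0.
have [_ _ b1 b2] := dbounds (hV (i - 1) (j - 1)) hv sh0.
have [c1 c2 _ _] := dbounds (hV (i + 1) (j - 1)) hv sh0.
have [_ _ d1 d2] := dbounds (hV (i - 1) (j + 1)) hv sh0.
have [A0 A1] := max3_le b2 a1 X0.
have [B0 B1] := max3_le d2 c1 X0.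
have [C0 C1] := max3_le a2 b1 Y0.
have [D0 D1] := max3_le c2 d1 Y0.
apply: (upw (beta := (Num.sqrt 2 * h)^-1)) => //.
- apply: mulr_ge0; lra.
- set s := (2 - p) * _.
  have sb : `|s| <= `|2 - p| * (2 / h) by rewrite /s normrM ler_wpM2l.
  have w0 : 0 <= Num.sqrt 2 * (Num.sqrt 2 * h)^-1 by apply: mulr_ge0 => //; exact: ltW.
  have k0 : 0 <= tau * nu by apply: mulr_ge0; lra.
  apply: (le_trans (y := tau * nu * (`|2 - p| * (2 / h)) * (Num.sqrt 2 * (Num.sqrt 2 * h)^-1))).
    by apply: ler_wpM2r => //; apply: ler_wpM2l.
  have -> : tau * nu * (`|2 - p| * (2 / h)) * (Num.sqrt 2 * (Num.sqrt 2 * h)^-1)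
     = tau * (2 * nu * `|2 - p|) / h ^+ 2.
    by field; rewrite !lt0r_neq0.
  by rewrite ler_pdivrMr // mul1r.
Qed.



Lemma refl_range (n : nat) (i : int) : (0 < n)%N -> 0 <= refl n i /\ refl n i < n%:Z.
Proof.
move=> n0; rewrite /refl.
have d0 : (0 < (2 * n)%:Z) by rewrite ltz_nat; lia.
have r0 := modz_ge0 i (lt0r_neq0 d0).
have r1 := ltz_pmod i d0.
case: ifP => h; first by split.
move/negbT: h; rewrite -leNgt => h.
move: r0 r1 h; set r := (i %% _)%Z; rewrite !PoszM => *; split; lia.
Qed.

Lemma ext_bounds (R : realType) (N M : nat) (u : grid R) lo hi : (0 < N)%N -> (0 < M)%N ->
  (forall i j : int, 0 <= i < N%:Z -> 0 <= j < M%:Z -> lo <= u i j <= hi) ->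
  forall i j, lo <= ext N M u i j <= hi.
Proof.
move=> N0 M0 hu i j; rewrite /ext.
have [a1 a2] := refl_range i N0; have [b1 b2] := refl_range j M0.
by apply: hu; apply/andP; split.
Qed.

Lemma ext_all (R : realType) (N M : nat) (u : grid R) lo hi :
  (forall i j : int, lo <= u i j <= hi) -> forall i j, lo <= ext N M u i j <= hi.
Proof. by move=> hu i j; apply: hu. Qed.

Lemma bigmax_ub (R : realType) n (x0 : R) (G : nat -> R) k : (k < n)%N ->
  G k <= \big[Num.max/x0]_(i < n) G i.
Proof.
rewrite -(big_mkord (fun _ => true)) /index_iota subn0 => hk.
have : k \in iota 0 n by rewrite mem_iota. move=> {hk}.
elim: (iota 0 n) => [//|a s IH]; rewrite inE big_cons le_max.
case/orP => [/eqP ->|/IH ->]; by rewrite ?lexx ?orbT.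
Qed.

Lemma bigmax_lub (R : realType) n (x0 S : R) (G : nat -> R) : x0 <= S ->
  (forall k, (k < n)%N -> G k <= S) -> \big[Num.max/x0]_(i < n) G i <= S.
Proof.
move=> h0 hk; apply: (big_ind (fun x => x <= S)) => //.
  by move=> x y hx hy; rewrite ge_max hx hy.
by move=> i _; apply: hk.
Qed.

Lemma bigmin_lb (R : realType) n (x0 : R) (G : nat -> R) k : (k < n)%N ->
  \big[Num.min/x0]_(i < n) G i <= G k.
Proof.
rewrite -(big_mkord (fun _ => true)) /index_iota subn0 => hk.
have : k \in iota 0 n by rewrite mem_iota. move=> {hk}.
elim: (iota 0 n) => [//|a s IH]; rewrite inE big_cons ge_min.
case/orP => [/eqP ->|/IH ->]; by rewrite ?lexx ?orbT.
Qed.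

Lemma bigmin_glb (R : realType) n (x0 S : R) (G : nat -> R) : S <= x0 ->
  (forall k, (k < n)%N -> S <= G k) -> S <= \big[Num.min/x0]_(i < n) G i.
Proof.
move=> h0 hk; apply: (big_ind (fun x => S <= x)) => //.
  by move=> x y hx hy; rewrite le_min hx hy.
by move=> i _; apply: hk.
Qed.

Lemma grid_bounds (R : realType) (N M : nat) (u : grid R) :
  forall i j : int, 0 <= i < N%:Z -> 0 <= j < M%:Z ->
  gridmin N M u <= u i j <= gridmax N M u.
Proof.
move=> i j /andP[i0 hi] /andP[j0 hj].
case: i i0 hi => // i _ hi; case: j j0 hj => // j _ hj.
rewrite ltz_nat in hi; rewrite ltz_nat in hj.
apply/andP; split.
- apply: le_trans (bigmin_lb _ (fun i : nat => \big[Num.min/u 0 0]_(j < M) u i%:Z j%:Z) hi) _.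
  exact: (bigmin_lb _ (fun j : nat => u i%:Z j%:Z) hj).
- apply: le_trans (bigmax_ub _ (fun i : nat => \big[Num.max/u 0 0]_(j < M) u i%:Z j%:Z) hi).
  exact: (bigmax_ub _ (fun j : nat => u i%:Z j%:Z) hj).
Qed.

Lemma supnorm_ge0 (R : realType) (N M : nat) (u : grid R) : 0 <= supnorm N M u.
Proof.
apply: (big_ind (fun x => 0 <= x)) => //.
  by move=> x y hx hy; rewrite le_max hx.
move=> i _; apply: (big_ind (fun x => 0 <= x)) => //.
  by move=> x y hx hy; rewrite le_max hx.
Qed.

Lemma supnorm_ub (R : realType) (N M : nat) (u : grid R) (i j : nat) :
  (i < N)%N -> (j < M)%N -> `|u i%:Z j%:Z| <= supnorm N M u.
Proof.
move=> hi hj.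
apply: le_trans (bigmax_ub _ (fun i : nat => \big[Num.max/0]_(j < M) `|u i%:Z j%:Z|) hi).
exact: (bigmax_ub _ (fun j : nat => `|u i%:Z j%:Z|) hj).
Qed.

Unset Implicit Arguments. Set Strict Implicit.


Lemma step_pres (R : realType) (N M : nat) (p h nu tau : R) (u : grid R) (lo hi : R) :
  (0 < N)%N -> (0 < M)%N ->
  0 < h -> 0 < nu -> nu < 1 -> 0 < tau ->
  (`|p - 1| != 0 -> tau <= h ^+ 2 / (4 * (1 - nu) * `|p - 1|)) ->
  (`|p - 1| != 0 -> tau <= h ^+ 2 / (2 * nu * `|p - 1|)) ->
  (`|2 - p| != 0 -> tau <= h ^+ 2 / (2 * Num.sqrt 2 * (1 - nu) * `|2 - p|)) ->
  (`|2 - p| != 0 -> tau <= h ^+ 2 / (2 * nu * `|2 - p|)) ->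
  (forall i j : int, 0 <= i < N%:Z -> 0 <= j < M%:Z -> lo <= u i j <= hi) ->
  forall i j, lo <= scheme_step N M p h nu tau u i j <= hi.
Proof.
move=> N0 M0 h0 nu0 nu1 t0 T1 T2 T3 T4 hu.
have H0 := ext_bounds N0 M0 hu.
have H1 : forall i j, lo <= step1 N M p h nu tau u i j <= hi.
  by move=> i j; apply: step_Dplus.
have H2 : forall i j, lo <= step2 N M p h nu tau (step1 N M p h nu tau u) i j <= hi.
  by move=> i j; apply: step_Dcross => //; apply: ext_all.
have H3 : forall i j, lo <= step3 N M p h nu tau (step2 N M p h nu tau (step1 N M p h nu tau u)) i j <= hi.
  by move=> i j; apply: step_Mplus => //; apply: ext_all.
by move=> i j; apply: step_Mcross => //; apply: ext_all.
Qed.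

Theorem proposition7 (R : realType) (N M : nat) (p h nu tau : R)
    (f : grid R) :
  (0 < N)%N -> (0 < M)%N ->
  0 < h -> 0 < nu -> nu < 1 -> 0 < tau ->
  (`|p - 1| != 0 -> tau <= h ^+ 2 / (4 * (1 - nu) * `|p - 1|)) ->
  (`|p - 1| != 0 -> tau <= h ^+ 2 / (2 * nu * `|p - 1|)) ->
  (`|2 - p| != 0 -> tau <= h ^+ 2 / (2 * Num.sqrt 2 * (1 - nu) * `|2 - p|)) ->
  (`|2 - p| != 0 -> tau <= h ^+ 2 / (2 * nu * `|2 - p|)) ->
  (forall k : nat, (1 <= k)%N ->
     supnorm N M (iterate N M p h nu tau f k)
       <= supnorm N M (iterate N M p h nu tau f k.-1)) /\
  (forall (k n m : nat), (1 <= k)%N -> (n < N)%N -> (m < M)%N ->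
     gridmin N M f <= iterate N M p h nu tau f k n%:Z m%:Z <= gridmax N M f).
Proof.
move=> N0 M0 h0 nu0 nu1 t0 T1 T2 T3 T4.
have pres := fun u lo hi => @step_pres R N M p h nu tau u lo hi N0 M0 h0 nu0 nu1 t0 T1 T2 T3 T4.
split.
- move=> [//|k] _.
  change (supnorm N M (scheme_step N M p h nu tau (iterate N M p h nu tau f k))
    <= supnorm N M (iterate N M p h nu tau f k)).
  set u := iterate N M p h nu tau f k.
  set S := supnorm N M u.
  have S0 : 0 <= S := supnorm_ge0 N M u.
  have hmax : gridmax N M u <= S.
    apply: (bigmax_lub (G := fun i : nat => \big[Num.max/u 0 0]_(j < M) u i%:Z j%:Z)).
      by apply: le_trans (real_ler_norm _) (supnorm_ub u N0 M0); rewrite num_real.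
    move=> i hi; apply: (bigmax_lub (G := fun j : nat => u i%:Z j%:Z)).
      by apply: le_trans (real_ler_norm _) (supnorm_ub u N0 M0); rewrite num_real.
    by move=> j hj; apply: le_trans (real_ler_norm _) (supnorm_ub u hi hj); rewrite num_real.
  have hmin : - S <= gridmin N M u.
    have e : forall x : R, `|x| <= S -> - S <= x by move=> x; rewrite ler_norml => /andP[].
    apply: (bigmin_glb (G := fun i : nat => \big[Num.min/u 0 0]_(j < M) u i%:Z j%:Z)).
      exact/e/supnorm_ub.
    move=> i0 hi; apply: (bigmin_glb (G := fun j : nat => u i0%:Z j%:Z)); first exact/e/supnorm_ub.
    by move=> j hj; apply/e/supnorm_ub.
  apply: (bigmax_lub (G := fun i : nat => \big[Num.max/0]_(j < M) `|scheme_step N M p h nu tau u i%:Z j%:Z|)) => // i hi.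
  apply: (bigmax_lub (G := fun j : nat => `|scheme_step N M p h nu tau u i%:Z j%:Z|)) => // j hj.
  have /andP[l1 l2] := pres u _ _ (grid_bounds u) i j.
  rewrite ler_norml; apply/andP; split; lra.
- move=> k n m _ hn hm.
  suff: forall k i j, 0 <= i < N%:Z -> 0 <= j < M%:Z ->
      gridmin N M f <= iterate N M p h nu tau f k i j <= gridmax N M f.
    by move=> /(_ k n%:Z m%:Z); apply; rewrite ltz_nat.
  elim=> [|k' IH] i j hi hj; first exact: grid_bounds.
  change (gridmin N M f <= scheme_step N M p h nu tau (iterate N M p h nu tau f k') i j <= gridmax N M f).
  exact: pres.
Qed.
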